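(* For every pair of non-uniformly stable matchings $\mu,\sigma$ in $G$, both $\mu\wedge\sigma$ and $\mu\vee\sigma$ are non-uniformly stable matchings in $G$.
   Context: Setting: $G=(V,E)$ is a finite simple bipartite graph with $V=V_1\sqcup V_2$, every edge joining a vertex of $V_1$ to a vertex of $V_2$; an edge is identified with the set of its two endpoints. $E$ is partitioned into $E_1,E_2$. For $F\subseteq E$ and $v\in V$, $F(v)$ is the set of edges of $F$ incident to $v$. For every $v\in V$ there is a transitive and complete binary relation $\succsim_v$ on $E(v)\cup\{\emptyset\}$ with $e\succsim_v\emptyset$ and $\emptyset\not\succsim_v e$ for all $e\in E(v)$; $e\succ_v f$ means $e\succsim_v f$ and $f\not\succsim_v e$. A matching is $\mu\subseteq E$ with $|\mu(v)|\le1$ for all $v$; $\mu(v)$ denotes the edge of $\mu$ at $v$, or $\emptyset$. An edge $e\in E\setminus\mu$ weakly blocks $\mu$ if $e\succsim_v\mu(v)$ for every $v\in e$; it strongly blocks $\mu$ if additionally $e\succ_w\mu(w)$ for some $w\in e$. $\mu$ is non-uniformly stable if no edge of $E_1\setminus\mu$ weakly blocks $\mu$ and no edge of $E_2\setminus\mu$ strongly blocks $\mu$. For non-uniformly stable $\mu,\sigma$, define for each $v\in V_1$: $(\mu\wedge\sigma)(v)=\mu(v)$ if $\mu(v)\succsim_v\sigma(v)$ and $=\sigma(v)$ if $\sigma(v)\succ_v\mu(v)$; $(\mu\vee\sigma)(v)=\mu(v)$ if $\sigma(v)\succsim_v\mu(v)$ and $=\sigma(v)$ if $\mu(v)\succ_v\sigma(v)$.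 Then $\mu\wedge\sigma$ (resp. $\mu\vee\sigma$) is the set $\{(\mu\wedge\sigma)(v): v\in V_1\}\setminus\{\emptyset\}$ (resp. with $\vee$), a subset of $\mu\cup\sigma$. *)

(* Defs.v *)
From mathcomp Require Import all_boot.
Set Implicit Arguments. Unset Strict Implicit. Unset Printing Implicit Defensive.

Section Defs.
Variable V : finType.

(* side v = true  <->  v \in V_1 ; side v = false <-> v \in V_2.
   An edge is the 2-set of its endpoints. *)
Definition bipartite_edges (side : V -> bool) (E : {set {set V}}) : Prop :=
  forall e, e \in E -> exists u w, [/\ side u, ~~ side w & e = [set u; w]].

(* Preferences: pref v x y means x ≿_v y, where None stands for ∅
   and Some e for the edge e. Only values on E(v) ∪ {∅} matter. *)
Definition in_dom (E : {set {set V}}) (v : V) (x : option {set V}) : bool :=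
  if x is Some e then (e \in E) && (v \in e) else true.

Definition pref_ok (E : {set {set V}}) (pref : V -> option {set V} -> option {set V} -> bool) : Prop :=
  forall v,
  [/\ (forall x y z, in_dom E v x -> in_dom E v y -> in_dom E v z ->
         pref v x y -> pref v y z -> pref v x z),
      (forall x y, in_dom E v x -> in_dom E v y -> pref v x y || pref v y x)
    & (forall e, e \in E -> v \in e -> pref v (Some e) None && ~~ pref v None (Some e))].

Definition strict_pref (pref : V -> option {set V} -> option {set V} -> bool) v x y :=
  pref v x y && ~~ pref v y x.

Definition is_matching (E mu : {set {set V}}) : Prop :=
  mu \subset E /\ forall v, #|[set e in mu | v \in e]| <= 1.

Definition mate (mu : {set {set V}}) (v : V) : option {set V} :=
  [pick e in mu | v \in e].

Definition weakly_blocks (pref : V -> option {set V} -> option {set V} -> bool) (E mu : {set {set V}}) (e : {set V}) : Prop :=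
  [/\ e \in E, e \notin mu & forall v, v \in e -> pref v (Some e) (mate mu v)].

Definition strongly_blocks (pref : V -> option {set V} -> option {set V} -> bool) (E mu : {set {set V}}) (e : {set V}) : Prop :=
  weakly_blocks pref E mu e /\
  exists w, w \in e /\ strict_pref pref w (Some e) (mate mu w).

Definition nonuniformly_stable (pref : V -> option {set V} -> option {set V} -> bool) (E E1 mu : {set {set V}}) : Prop :=
  [/\ is_matching E mu,
      (forall e, e \in E1 -> ~ weakly_blocks pref E mu e)
    & (forall e, e \in E :\: E1 -> ~ strongly_blocks pref E mu e)].

Definition meet_at (pref : V -> option {set V} -> option {set V} -> bool) (mu sigma : {set {set V}}) v : option {set V} :=
  if pref v (mate mu v) (mate sigma v) then mate mu v else mate sigma v.

Definition join_at (pref : V -> option {set V} -> option {set V} -> bool) (mu sigma : {set {set V}}) v : option {set V} :=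
  if pref v (mate sigma v) (mate mu v) then mate mu v else mate sigma v.

Definition meetM (pref : V -> option {set V} -> option {set V} -> bool) side (mu sigma : {set {set V}}) : {set {set V}} :=
  [set e | [exists v, side v && (meet_at pref mu sigma v == Some e)]].

Definition joinM (pref : V -> option {set V} -> option {set V} -> bool) side (mu sigma : {set {set V}}) : {set {set V}} :=
  [set e | [exists v, side v && (join_at pref mu sigma v == Some e)]].

End Defs.

(* Main.v *)
Require Import Defs.
From mathcomp Require Import all_boot.
Set Implicit Arguments. Unset Strict Implicit. Unset Printing Implicit Defensive.

Section Proof.
Variable V : finType.
Variable side : V -> bool.
Variables E E1 : {set {set V}}.
Variable pref : V -> option {set V} -> option {set V} -> bool.
Hypothesis Hbip : bipartite_edges side E.
Hypothesis HE1 : E1 \subset E.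
Hypothesis Hpref : pref_ok E pref.

Implicit Types (M a b : {set {set V}}) (e f g : {set V}).
Local Notation dom := (in_dom E).
Local Notation strict := (strict_pref pref).
Local Notation stable := (nonuniformly_stable pref E E1).

Lemma ptrans v x y z : dom v x -> dom v y -> dom v z -> pref v x y -> pref v y z -> pref v x z.
Proof. by case: (Hpref v) => H _ _; apply: H. Qed.
Lemma ptotal v x y : dom v x -> dom v y -> pref v x y || pref v y x.
Proof. by case: (Hpref v) => _ H _; apply: H. Qed.
Lemma prefl v x : dom v x -> pref v x x.
Proof. by move=> h; have := ptotal h h; rewrite orbb. Qed.
Lemma pnone v e : e \in E -> v \in e -> pref v (Some e) None && ~~ pref v None (Some e).
Proof. by case: (Hpref v) => _ _ H; apply: H. Qed.
Lemma npref v x y : dom v x -> dom v y -> ~~ pref v x y -> pref v y x.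
Proof. by move=> hx hy; have := ptotal hx hy; case: (pref v x y). Qed.
Lemma nstrict v x y : dom v x -> dom v y -> ~~ strict v x y -> pref v y x.
Proof. move=> hx hy; rewrite /strict_pref negb_and negbK => /orP [h|//]; exact: npref. Qed.
Lemma strict_pref_trans v x y z : dom v x -> dom v y -> dom v z -> strict v x y -> pref v y z -> strict v x z.
Proof.
move=> hx hy hz /andP[hxy nyx] hyz; apply/andP; split; first exact: ptrans hxy hyz.
apply/negP => hzx; by rewrite (ptrans hy hz hx hyz hzx) in nyx.
Qed.
Lemma strict_irr v x : ~~ strict v x x.
Proof. by rewrite /strict_pref; case: (pref v x x). Qed.
Lemma strictW v x y : strict v x y -> pref v x y.
Proof. by case/andP. Qed.
Lemma strict_none v y : dom v y -> strict v None y -> False.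
Proof.
case: y => [g /= /andP[gE vg]|_]; last by rewrite (negbTE (strict_irr _ _)).
by case/andP=> h _; move: (pnone gE vg) => /andP[_ /negP].
Qed.

Lemma edgeP e : e \in E -> exists u w, [/\ side u, ~~ side w & e = [set u; w]].
Proof. exact: Hbip. Qed.

Lemma edge_side1 e x y : e \in E -> x \in e -> y \in e -> side x -> side y -> x = y.
Proof.
move=> /edgeP [u [w [su sw ->]]] /set2P[->|->] /set2P[->|->] //.
- by move=> _ h; rewrite h in sw.
- by move=> h; rewrite h in sw.
Qed.
Lemma edge_side2 e x y : e \in E -> x \in e -> y \in e -> ~~ side x -> ~~ side y -> x = y.
Proof.
move=> /edgeP [u [w [su sw ->]]] /set2P[->|->] /set2P[->|->] //.
- by rewrite su.
- by rewrite su.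
Qed.
Lemma edge_at1 e u : e \in E -> u \in e -> side u -> exists w, ~~ side w /\ e = [set u; w].
Proof.
move=> eE ue su; case: (edgeP eE) => [a [b [sa sb ee]]].
have au : u = a by apply: (edge_side1 eE ue _ su sa); rewrite ee !inE eqxx.
by exists b; rewrite ee au.
Qed.
Lemma edge_at2 e w : e \in E -> w \in e -> ~~ side w -> exists u, side u /\ e = [set u; w].
Proof.
move=> eE we sw; case: (edgeP eE) => [a [b [sa sb ee]]].
have au : w = b by apply: (edge_side2 eE we _ sw sb); rewrite ee !inE eqxx orbT.
by exists a; rewrite ee au.
Qed.
Lemma side_neq u w : side u -> ~~ side w -> u != w.
Proof. by move=> su sw; apply/eqP => h; rewrite -h su in sw. Qed.

Lemma mateSome M v e : mate M v = Some e -> e \in M /\ v \in e.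
Proof. by rewrite /mate; case: pickP => // x /andP[h1 h2] [<-]. Qed.
Lemma mateNone M v e : mate M v = None -> e \in M -> v \in e -> False.
Proof. by rewrite /mate; case: pickP => // H _ eM ve; move: (H e); rewrite /= eM ve. Qed.
Lemma mate_in M v e : is_matching E M -> e \in M -> v \in e -> mate M v = Some e.
Proof.
case=> _ Hm eM ve; rewrite /mate; case: pickP => [x /andP[xM vx]|/(_ e)]; last by rewrite /= eM ve.
congr Some; have /card_le1_eqP H := Hm v.
by apply: H; rewrite inE ?xM ?vx ?eM ?ve.
Qed.
Lemma mate_dom M v : M \subset E -> dom v (mate M v).
Proof.
move=> sub; case h: (mate M v) => [e|//]; case: (mateSome h) => eM ve.
by rewrite /= (subsetP sub _ eM) ve.
Qed.

Lemma stable_match M : stable M -> is_matching E M.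
Proof. by case. Qed.
Lemma stable_sub M : stable M -> M \subset E.
Proof. by case=> [[]]. Qed.
Lemma sdom M v : stable M -> dom v (mate M v).
Proof. by move/stable_sub; apply: mate_dom. Qed.
Lemma edom g v : g \in E -> v \in g -> dom v (Some g).
Proof. by move=> gE vg; rewrite /= gE vg. Qed.

Lemma no_sblock M g u w : stable M -> g \in E -> g \notin M -> g = [set u; w] ->
  pref u (Some g) (mate M u) -> pref w (Some g) (mate M w) ->
  strict u (Some g) (mate M u) || strict w (Some g) (mate M w) -> False.
Proof.
move=> [_ H1 H2] gE gM ge pu pw hs.
have wb : weakly_blocks pref E M g.
  by rewrite /weakly_blocks; split=> // v; rewrite {1}ge => /set2P[->|->].
case: (boolP (g \in E1)) => gE1; first exact: (H1 _ gE1 wb).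
apply: (H2 g); first by rewrite inE gE1 gE.
rewrite /strongly_blocks; split=> //; case/orP: hs => h; [exists u | exists w]; split=> //; by rewrite ge !inE eqxx ?orbT.
Qed.

Definition Ust a b := [set u | side u && strict u (mate b u) (mate a u)].
Definition Wmt a b := [set w | ~~ side w && strict w (mate a w) (mate b w)].

Lemma mateS_strict a b v : stable a -> stable b -> strict v (mate a v) (mate b v) ->
  exists f, mate a v = Some f.
Proof.
move=> sa sb; case h: (mate a v) => [f|]; first by exists f.
by move=> /(strict_none (sdom _ sb)).
Qed.

Lemma lemA a b w : stable a -> stable b -> w \in Wmt a b ->
  exists u, u \in Ust a b /\ mate a w = Some [set u; w].
Proof.
move=> sa sb; rewrite inE => /andP[sw hs].
case: (mateS_strict sa sb hs) => f hf; case: (mateSome hf) => fa wf.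
have fE := subsetP (stable_sub sa) _ fa.
case: (edge_at2 fE wf sw) => u [su fe]; exists u; split; last by rewrite hf fe.
have uf : u \in f by rewrite fe !inE eqxx.
have hu : mate a u = Some f := mate_in (stable_match sa) fa uf.
rewrite inE su /=; apply/negPn/negP => hn.
have pu := nstrict (sdom _ sb) (sdom _ sa) hn.
have fb : f \notin b.
  apply/negP => fb; move: hs; rewrite hf (mate_in (stable_match sb) fb wf).
  by rewrite (negbTE (strict_irr _ _)).
apply: (no_sblock sb fE fb fe); first by rewrite -hu.
- by rewrite -hf; apply: strictW.
- by rewrite -hf hs orbT.
Qed.

Lemma lemB a b u : stable a -> stable b -> u \in Ust a b ->
  exists w, w \in Wmt a b /\ mate b u = Some [set u; w].
Proof.
move=> sa sb; rewrite inE => /andP[su hs].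
case: (mateS_strict sb sa hs) => g hg; case: (mateSome hg) => gb ug.
have gE := subsetP (stable_sub sb) _ gb.
case: (edge_at1 gE ug su) => w [sw ge]; exists w; split; last by rewrite hg ge.
have wg : w \in g by rewrite ge !inE eqxx orbT.
have hw : mate b w = Some g := mate_in (stable_match sb) gb wg.
rewrite inE sw /=; apply/negPn/negP => hn.
have pw := nstrict (sdom _ sa) (sdom _ sb) hn.
have ga : g \notin a.
  apply/negP => ga; move: hs; rewrite hg (mate_in (stable_match sa) ga ug).
  by rewrite (negbTE (strict_irr _ _)).
apply: (no_sblock sa gE ga ge).
- by rewrite -hg; apply: strictW.
- by rewrite -hw.
- by rewrite -hg hs.
Qed.

Lemma side_neq' u w : ~~ side w -> side u -> w != u.
Proof. by move=> sw su; rewrite eq_sym side_neq. Qed.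

Definition partner M v : V :=
  if mate M v is Some e then odflt v [pick x in e | x != v] else v.

Lemma partnerE M u w : mate M u = Some [set u; w] -> u != w -> partner M u = w.
Proof.
move=> h nuw; rewrite /partner h; case: pickP => [x /andP[/set2P[->|->] //]|].
- by rewrite eqxx.
- by move/(_ w); rewrite !inE eqxx orbT eq_sym nuw.
Qed.

Lemma count_bij a b : stable a -> stable b ->
  partner b @: Ust a b = Wmt a b /\ partner a @: Wmt a b = Ust a b.
Proof.
move=> sa sb.
have pB u : u \in Ust a b -> exists w, [/\ w \in Wmt a b, mate b u = Some [set u; w] & partner b u = w].
  move=> hu; case: (lemB sa sb hu) => w [hw hm]; exists w; split=> //.
  have nuw : u != w.
    by move: hu hw; rewrite !inE => /andP[su _] /andP[sw _]; exact: side_neq.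
  exact: (partnerE hm nuw).
have pA w : w \in Wmt a b -> exists u, [/\ u \in Ust a b, mate a w = Some [set u; w] & partner a w = u].
  move=> hw; case: (lemA sa sb hw) => u [hu hm]; exists u; split=> //.
  have nuw : w != u.
    by move: hu hw; rewrite !inE => /andP[su _] /andP[sw _]; rewrite eq_sym; exact: side_neq.
  have hm' : mate a w = Some [set w; u] by rewrite hm setUC.
  exact: (partnerE hm' nuw).
have i1 : {in Ust a b &, injective (partner b)}.
  move=> u1 u2 h1 h2; case: (pB _ h1) => w1 [hw1 m1 ->]; case: (pB _ h2) => w2 [hw2 m2 ->] ew.
  subst w2; case: (mateSome m1) => e1 _; case: (mateSome m2) => e2 _.
  have w1in u : w1 \in [set u; w1] by rewrite !inE eqxx orbT.
  have := mate_in (stable_match sb) e1 (w1in u1).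
  rewrite (mate_in (stable_match sb) e2 (w1in u2)) => -[he].
  have : u1 \in [set u2; w1] by rewrite he !inE eqxx.
  case/set2P => // hu; move: h1 hw1; rewrite !inE hu => /andP[s1 _] /andP[s2 _].
  by rewrite s1 in s2.
have i2 : {in Wmt a b &, injective (partner a)}.
  move=> w1 w2 h1 h2; case: (pA _ h1) => u1 [hu1 m1 ->]; case: (pA _ h2) => u2 [hu2 m2 ->] eu.
  subst u2; case: (mateSome m1) => e1 _; case: (mateSome m2) => e2 _.
  have u1in w : u1 \in [set u1; w] by rewrite !inE eqxx.
  have := mate_in (stable_match sa) e1 (u1in w1).
  rewrite (mate_in (stable_match sa) e2 (u1in w2)) => -[he].
  have : w1 \in [set u1; w2] by rewrite he !inE eqxx orbT.
  case/set2P => // hu; move: hu1 h1; rewrite !inE hu => /andP[s1 _] /andP[s2 _].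
  by rewrite s1 in s2.
have s1 : partner b @: Ust a b \subset Wmt a b.
  by apply/subsetP => w /imsetP[u hu ->]; case: (pB _ hu) => w' [? _ ->].
have s2 : partner a @: Wmt a b \subset Ust a b.
  by apply/subsetP => u /imsetP[w hw ->]; case: (pA _ hw) => u' [? _ ->].
have c1 := card_in_imset i1; have c2 := card_in_imset i2.
have l1 := subset_leq_card s1; have l2 := subset_leq_card s2.
split; apply/eqP; rewrite eqEcard ?s1 ?s2 /=.
- by rewrite c1 -c2.
- by rewrite c2 -c1.
Qed.

Lemma wside a b w : w \in Wmt a b -> ~~ side w.
Proof. by rewrite inE => /andP[]. Qed.
Lemma uside a b u : u \in Ust a b -> side u.
Proof. by rewrite inE => /andP[]. Qed.

Lemma lemC a b w : stable a -> stable b -> w \in Wmt a b ->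
  exists u, u \in Ust a b /\ mate b u = Some [set u; w].
Proof.
move=> sa sb hw; case: (count_bij sa sb) => [h _]; move: hw; rewrite -h.
case/imsetP => u hu ->; case: (lemB sa sb hu) => w' [hw hm]; exists u; split=> //.
by rewrite hm (partnerE hm (side_neq (uside hu) (wside hw))).
Qed.

Lemma lemC' a b u : stable a -> stable b -> u \in Ust a b ->
  exists w, w \in Wmt a b /\ mate a w = Some [set u; w].
Proof.
move=> sa sb hu; case: (count_bij sa sb) => [_ h]; move: hu; rewrite -h.
case/imsetP => w hw ->; case: (lemA sa sb hw) => u' [hu hm]; exists w; split=> //.
have hm' : mate a w = Some [set w; u'] by rewrite hm setUC.
by rewrite hm (partnerE hm' (side_neq' (wside hw) (uside hu))).
Qed.

Lemma mate_char M v o : (forall e, e \in M -> v \in e -> o = Some e) ->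
  (forall e, o = Some e -> e \in M /\ v \in e) ->
  mate M v = o /\ #|[set e in M | v \in e]| <= 1.
Proof.
move=> H1 H2; split.
  rewrite /mate; case: pickP => [x /andP[xM vx]|h]; first by rewrite (H1 x).
  case ho: o => [e|//]; case: (H2 e ho) => eM ve; by move: (h e); rewrite /= eM ve.
apply/card_le1_eqP => x y; rewrite !inE => /andP[xM vx] /andP[yM vy].
by move: (H1 x xM vx) (H1 y yM vy) => -> [].
Qed.

Lemma transfer1 M x e x0 y : stable x -> M \subset E ->
  weakly_blocks pref E M e -> e = [set x0; y] ->
  mate M y = mate x y -> pref x0 (mate M x0) (mate x x0) ->
  weakly_blocks pref E x e /\
  (forall w, w \in e -> strict w (Some e) (mate M w) -> strict w (Some e) (mate x w)).
Proof.
move=> sx sub [eE eM hp] ee hy hx0.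
have ye : y \in e by rewrite ee !inE eqxx orbT.
have ex : e \notin x.
  apply/negP => ex; have := mate_in (stable_match sx) ex ye; rewrite -hy.
  by case/mateSome=> h _; rewrite h in eM.
split.
  have x0e : x0 \in e by rewrite ee !inE eqxx.
  split=> // v; rewrite {1}ee => /set2P[->|->].
  - exact: (ptrans (edom eE x0e) (mate_dom _ sub) (sdom _ sx) (hp _ x0e) hx0).
  - by rewrite -hy; apply: hp.
have x0e : x0 \in e by rewrite ee !inE eqxx.
move=> w; rewrite {1}ee => /set2P[->|->] hs.
- exact: (strict_pref_trans (edom eE x0e) (mate_dom _ sub) (sdom _ sx) hs hx0).
- by rewrite -hy.
Qed.

Lemma transfer mu sigma M (T : pred V) : stable mu -> stable sigma -> M \subset E ->
  (forall v, exists o, [/\ (forall e, e \in M -> v \in e -> o = Some e),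
       (forall e, o = Some e -> e \in M /\ v \in e),
       (o = mate mu v \/ o = mate sigma v) &
       (T v -> pref v o (mate mu v) && pref v o (mate sigma v))]) ->
  (forall e, e \in E -> exists x y, e = [set x; y] /\ T x) ->
  stable M.
Proof.
move=> smu ssi sub Hv Ht.
have Hm : is_matching E M.
  by split=> // v; case: (Hv v) => o [h1 h2 _ _]; case: (mate_char h1 h2).
have key e : weakly_blocks pref E M e -> exists x, [/\ stable x,
    weakly_blocks pref E x e &
    (forall w, w \in e -> strict w (Some e) (mate M w) -> strict w (Some e) (mate x w))].
  move=> wb; case: (wb) => eE _ _; case: (Ht e eE) => x0 [y [ee Tx]].
  case: (Hv y) => o [h1 h2 hor _]; case: (mate_char h1 h2) => hmy _.
  case: (Hv x0) => o' [h1' h2' _ hT]; case: (mate_char h1' h2') => hmx _.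
  case/andP: (hT Tx); rewrite -hmx => p1 p2.
  case: hor => hor; rewrite hor in hmy.
  - by exists mu; split=> //; case: (transfer1 smu sub wb ee hmy p1).
  - by exists sigma; split=> //; case: (transfer1 ssi sub wb ee hmy p2).
split=> // e.
  move=> eE1 wb; case: (key e wb) => x [[_ H _] wx _]; exact: (H e eE1 wx).
move=> eE2 [wb [w [we hs]]]; case: (key e wb) => x [[_ _ H] wx hx].
by apply: (H e eE2); split=> //; exists w; split=> //; apply: hx.
Qed.

Definition Mc (c : V -> option {set V}) := [set e | [exists v, side v && (c v == Some e)]].

Lemma Mc_in c e : e \in Mc c -> exists v, side v /\ c v = Some e.
Proof. by rewrite inE => /existsP[v /andP[sv /eqP h]]; exists v. Qed.
Lemma Mc_some c v e : side v -> c v = Some e -> e \in Mc c.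
Proof. by move=> sv h; rewrite inE; apply/existsP; exists v; rewrite sv h eqxx. Qed.

Lemma mm x e v v' : stable x -> mate x v' = Some e -> v \in e -> mate x v = Some e.
Proof. by move=> sx /mateSome[ex _] ve; apply: mate_in (stable_match sx) ex ve. Qed.

Lemma same_w u w w' : side u -> ~~ side w -> w \in [set u; w'] -> w = w'.
Proof. by move=> su sw /set2P[h|//]; rewrite h su in sw. Qed.

Lemma in1 (u w : V) : u \in [set u; w]. Proof. by rewrite !inE eqxx. Qed.
Lemma in2 (u w : V) : w \in [set u; w]. Proof. by rewrite !inE eqxx orbT. Qed.

Section Choice.
Variables mu sigma : {set {set V}}.
Hypotheses (smu : stable mu) (ssi : stable sigma).
Variable c : V -> option {set V}.
Hypothesis Hc : forall v, c v = mate mu v \/ c v = mate sigma v.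

Lemma c_edge v e : c v = Some e -> e \in E /\ v \in e.
Proof.
case: (Hc v) => -> /mateSome [h1 h2]; split=> //.
- exact: (subsetP (stable_sub smu)).
- exact: (subsetP (stable_sub ssi)).
Qed.

Lemma Mc_sub : Mc c \subset E.
Proof. by apply/subsetP => e /Mc_in [v [_ /c_edge[]]]. Qed.

Lemma Mc_V1 u : side u -> (forall e, e \in Mc c -> u \in e -> c u = Some e) /\
  (forall e, c u = Some e -> e \in Mc c /\ u \in e).
Proof.
move=> su; split.
- move=> e /Mc_in [v [sv hv]] ue; case: (c_edge hv) => eE ve.
  by rewrite -(edge_side1 eE ve ue sv su).
- by move=> e h; split; [apply: Mc_some su h | case: (c_edge h)].
Qed.
End Choice.

Section Meet.
Variables mu sigma : {set {set V}}.
Hypotheses (smu : stable mu) (ssi : stable sigma).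
Local Notation mt := (meet_at pref mu sigma).

Lemma meet_V2 w : ~~ side w ->
  let o := if strict w (mate mu w) (mate sigma w) then mate sigma w else mate mu w in
  (forall e, e \in Mc mt -> w \in e -> o = Some e) /\
  (forall e, o = Some e -> e \in Mc mt /\ w \in e).
Proof.
move=> sw o; split.
- move=> e /Mc_in [v [sv hv]] we; rewrite /o.
  move: hv; rewrite /meet_at; case hp: (pref v (mate mu v) (mate sigma v)) => hv;
    case hs: (strict w (mate mu w) (mate sigma w)).
  + have hw : w \in Wmt mu sigma by rewrite inE sw hs.
    case: (lemA smu ssi hw) => u [hu hm].
    have hmw := mm smu hv we; rewrite hmw in hm; case: hm => hm.
    have ve : v \in e by case: (mateSome hv).
    have eE : e \in E by case: (mateSome hv) => h _; apply: (subsetP (stable_sub smu)).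
    have vu : v = u by apply: (edge_side1 eE ve _ sv (uside hu)); rewrite hm in1.
    move: hu; rewrite inE -vu => /andP[_ /andP[_]]; by rewrite hp.
  + exact: mm smu hv we.
  + exact: mm ssi hv we.
  + have ve : v \in e by case: (mateSome hv).
    have hu : v \in Ust mu sigma.
      rewrite inE sv /= /strict_pref hp andbT.
      by apply: npref; rewrite ?hp // ; apply: sdom.
    case: (lemB smu ssi hu) => w' [hw' hm]; rewrite hv in hm; case: hm => hm.
    have := @same_w v w w' sv sw; rewrite -hm => /(_ we) ww'.
    by move: hw'; rewrite -ww' inE hs andbF.
- move=> e; rewrite /o; case hs: (strict w (mate mu w) (mate sigma w)) => ho.
  + have hw : w \in Wmt mu sigma by rewrite inE sw hs.
    case: (lemC smu ssi hw) => u [hu hm].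
    have hsw := mm ssi hm (in2 u w); rewrite hsw in ho; case: ho => ho.
    split; last by rewrite -ho in2.
    apply: (Mc_some (uside hu)); rewrite /meet_at.
    move: hu; rewrite inE => /andP[_ /andP[_ /negbTE ->]]; by rewrite hm ho.
  + case: (mateSome ho) => emu we.
    have eE : e \in E by apply: (subsetP (stable_sub smu)).
    case: (edge_at2 eE we sw) => u [su ee].
    have hmu : mate mu u = Some e by apply: (mm smu ho); rewrite ee in1.
    split=> //; apply: (Mc_some su); rewrite /meet_at.
    suff -> : pref u (mate mu u) (mate sigma u) by [].
    apply: nstrict; [exact: sdom | exact: sdom |]; apply/negP => hsu.
    have hu : u \in Ust mu sigma by rewrite inE su hsu.
    case: (lemC' smu ssi hu) => w' [hw' hm].
    have := mm smu hm (in1 u w'); rewrite hmu ee => -[hee].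
    have := in2 u w; rewrite hee => /(same_w su sw) ww'.
    by move: hw'; rewrite -ww' inE hs andbF.
Qed.
End Meet.

Section Join.
Variables mu sigma : {set {set V}}.
Hypotheses (smu : stable mu) (ssi : stable sigma).
Local Notation jt := (join_at pref mu sigma).

Lemma join_V2 w : ~~ side w ->
  let o := if strict w (mate sigma w) (mate mu w) then mate sigma w else mate mu w in
  (forall e, e \in Mc jt -> w \in e -> o = Some e) /\
  (forall e, o = Some e -> e \in Mc jt /\ w \in e).
Proof.
move=> sw o; split.
- move=> e /Mc_in [v [sv hv]] we; rewrite /o.
  move: hv; rewrite /join_at; case hp: (pref v (mate sigma v) (mate mu v)) => hv;
    case hs: (strict w (mate sigma w) (mate mu w)).
  + have hw : w \in Wmt sigma mu by rewrite inE sw hs.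
    case: (lemC ssi smu hw) => u [hu hm].
    have hmw := mm smu hv we; rewrite (mm smu hm (in2 u w)) in hmw; case: hmw => hm'.
    have ve : v \in e by case: (mateSome hv).
    have eE : e \in E by case: (mateSome hv) => h _; apply: (subsetP (stable_sub smu)).
    have vu : v = u by apply: (edge_side1 eE ve _ sv (uside hu)); rewrite -hm' in1.
    move: hu; rewrite inE -vu => /andP[_ /andP[_]]; by rewrite hp.
  + exact: mm smu hv we.
  + exact: mm ssi hv we.
  + have ve : v \in e by case: (mateSome hv).
    have hu : v \in Ust sigma mu.
      rewrite inE sv /= /strict_pref hp andbT.
      by apply: npref; rewrite ?hp // ; apply: sdom.
    case: (lemC' ssi smu hu) => w' [hw' hm].
    have := mm ssi hm (in1 v w'); rewrite hv => -[hm'].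
    have := @same_w v w w' sv sw; rewrite -hm' => /(_ we) ww'.
    by move: hw'; rewrite -ww' inE hs andbF.
- move=> e; rewrite /o; case hs: (strict w (mate sigma w) (mate mu w)) => ho.
  + have hw : w \in Wmt sigma mu by rewrite inE sw hs.
    case: (lemA ssi smu hw) => u [hu hm].
    rewrite hm in ho; case: ho => ho.
    split; last by rewrite -ho in2.
    apply: (Mc_some (uside hu)); rewrite /join_at.
    move: hu; rewrite inE => /andP[_ /andP[_ /negbTE ->]].
    by rewrite (mm ssi hm (in1 u w)) ho.
  + case: (mateSome ho) => emu we.
    have eE : e \in E by apply: (subsetP (stable_sub smu)).
    case: (edge_at2 eE we sw) => u [su ee].
    have hmu : mate mu u = Some e by apply: (mm smu ho); rewrite ee in1.
    split=> //; apply: (Mc_some su); rewrite /join_at.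
    suff -> : pref u (mate sigma u) (mate mu u) by [].
    apply: nstrict; [exact: sdom | exact: sdom |]; apply/negP => hsu.
    have hu : u \in Ust sigma mu by rewrite inE su hsu.
    case: (lemB ssi smu hu) => w' [hw' hm].
    rewrite hmu ee in hm; case: hm => hee.
    have := in2 u w; rewrite hee => /(same_w su sw) ww'.
    by move: hw'; rewrite -ww' inE hs andbF.
Qed.
End Join.

Lemma meet_stable mu sigma : stable mu -> stable sigma ->
  stable (meetM pref side mu sigma).
Proof.
move=> smu ssi.
have Hc : forall v, meet_at pref mu sigma v = mate mu v \/ meet_at pref mu sigma v = mate sigma v.
  by move=> v; rewrite /meet_at; case: ifP; [left|right].
change (stable (Mc (meet_at pref mu sigma))).
apply: (@transfer mu sigma _ side smu ssi (Mc_sub smu ssi Hc)).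
- move=> v; case: (boolP (side v)) => sv.
  + exists (meet_at pref mu sigma v); case: (Mc_V1 smu ssi Hc sv) => h1 h2; split=> // _.
    rewrite /meet_at; case hp: (pref v (mate mu v) (mate sigma v)).
    * by rewrite hp prefl //; apply: sdom.
    * rewrite prefl ?andbT; last exact: sdom.
      by apply: npref; rewrite ?hp //; apply: sdom.
  + case: (meet_V2 smu ssi sv) => h1 h2.
    exists (if strict v (mate mu v) (mate sigma v) then mate sigma v else mate mu v).
    split; [exact: h1 | exact: h2 | | done].
    by case: ifP; [right|left].
- move=> e eE; case: (edgeP eE) => u [w [su sw ee]]; by exists u, w.
Qed.

Lemma join_stable mu sigma : stable mu -> stable sigma ->
  stable (joinM pref side mu sigma).
Proof.
move=> smu ssi.
have Hc : forall v, join_at pref mu sigma v = mate mu v \/ join_at pref mu sigma v = mate sigma v.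
  by move=> v; rewrite /join_at; case: ifP; [left|right].
change (stable (Mc (join_at pref mu sigma))).
apply: (@transfer mu sigma _ (fun v => ~~ side v) smu ssi (Mc_sub smu ssi Hc)).
- move=> v; case: (boolP (side v)) => sv.
  + exists (join_at pref mu sigma v); case: (Mc_V1 smu ssi Hc sv) => h1 h2; split=> //.

  + case: (join_V2 smu ssi sv) => h1 h2.
    exists (if strict v (mate sigma v) (mate mu v) then mate sigma v else mate mu v).
    split; [exact: h1 | exact: h2 | |].
    * by case: ifP; [right|left].
    * move=> _; case hs: (strict v (mate sigma v) (mate mu v)).
      - by rewrite prefl ?strictW //; apply: sdom.
      - rewrite prefl //=; last exact: sdom.
        by apply: nstrict; rewrite ?hs //; apply: sdom.
- move=> e eE; case: (edgeP eE) => u [w [su sw ee]]; by exists w, u; rewrite ee setUC.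
Qed.

End Proof.

Theorem lemma5p3 (V : finType) (side : V -> bool) (E E1 : {set {set V}})
  (pref : V -> option {set V} -> option {set V} -> bool)
  (mu sigma : {set {set V}}) :
  bipartite_edges side E ->
  E1 \subset E ->
  pref_ok E pref ->
  nonuniformly_stable pref E E1 mu ->
  nonuniformly_stable pref E E1 sigma ->
  nonuniformly_stable pref E E1 (meetM pref side mu sigma) /\
  nonuniformly_stable pref E E1 (joinM pref side mu sigma).
Proof.
move=> Hb HE Hp smu ssi; split.
- exact: (meet_stable Hb Hp smu ssi).
- exact: (join_stable Hb Hp smu ssi).
Qed.
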